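(* There exists an anonymous hedonic game with $n=7$ agents having strict and generally single-peaked preferences such that there is an infinite sequence of IS deviations starting from the singleton partition, and there is also an infinite sequence of IS deviations starting from the grand coalition $\{N\}$.
   Context: A hedonic game on agent set $N=[n]$ assigns to each agent $i$ a weak order $\succsim_i$ over coalitions containing $i$. In an anonymous hedonic game (AHG), each agent $i$ has a weak order $\succsim_i^S$ over sizes $\{1,\dots,n\}$ and coalitions are compared only via their sizes. Preferences are strict if these orders are linear. An AHG is generally single-peaked if there is a linear order $>$ on $[n]$ such that for every agent $i$ and all $x,y,z$ with $x>y>z$ or $z>y>x$, $x\succ_i^S y$ implies $y\succsim_i^S z$. The singleton partition is $\{\{i\}:i\in N\}$. An IS deviation of agent $i$ from partition $\pi$ to $\pi'$ is a move of $i$ alone from $\pi(i)$ into another coalition of $\pi$ or into a new singleton such that $\pi'(i)\succ_i\pi(i)$ and $\pi'(j)\succsim_j\pi(j)$ for every $j\in\pi'(i)\setminus\{i\}$. *)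

(* Defs.v *)
From mathcomp Require Import all_boot.
Set Implicit Arguments. Unset Strict Implicit. Unset Printing Implicit Defensive.

(* Agents are 'I_n.  Coalition sizes are natural numbers in {1, ..., n}.
   An anonymous hedonic game is given by, for each agent i, a relation
   prefS i x y  meaning  x ≿_i^S y  on sizes. *)

Definition in_sizes (n x : nat) : bool := (1 <= x <= n).

Definition is_AHG (n : nat) (prefS : 'I_n -> nat -> nat -> bool) : Prop :=
  forall i : 'I_n,
    (forall x y, in_sizes n x -> in_sizes n y -> prefS i x y || prefS i y x) /\
    (forall x y z, in_sizes n x -> in_sizes n y -> in_sizes n z ->
       prefS i x y -> prefS i y z -> prefS i x z).

Definition strict_prefs (n : nat) (prefS : 'I_n -> nat -> nat -> bool) : Prop :=
  forall i : 'I_n, forall x y, in_sizes n x -> in_sizes n y ->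
    prefS i x y -> prefS i y x -> x = y.

Definition sprefS (n : nat) (prefS : 'I_n -> nat -> nat -> bool) i x y : bool :=
  prefS i x y && ~~ prefS i y x.

Definition strict_linear_order_on (n : nat) (gt : nat -> nat -> bool) : Prop :=
  (forall x, in_sizes n x -> ~~ gt x x) /\
  (forall x y z, in_sizes n x -> in_sizes n y -> in_sizes n z ->
     gt x y -> gt y z -> gt x z) /\
  (forall x y, in_sizes n x -> in_sizes n y -> x <> y -> gt x y \/ gt y x).

Definition generally_single_peaked (n : nat) (prefS : 'I_n -> nat -> nat -> bool) : Prop :=
  exists gt : nat -> nat -> bool,
    strict_linear_order_on n gt /\
    forall (i : 'I_n) x y z, in_sizes n x -> in_sizes n y -> in_sizes n z ->
      ((gt x y && gt y z) || (gt z y && gt y x)) ->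
      sprefS prefS i x y -> prefS i y z.

(* Partitions of the agent set: {set {set 'I_n}} ; pi(i) = pblock P i. *)

(* The partition obtained from P when agent i leaves its coalition and joins
   C (C a coalition of P, or C = set0 for a new singleton). *)
Definition move (n : nat) (P : {set {set 'I_n}}) (i : 'I_n) (C : {set 'I_n})
  : {set {set 'I_n}} :=
  let B := pblock P i in
  [set X in ((P :\ B) :\ C) :|: [set B :\ i; i |: C] | X != set0].

Definition IS_deviation (n : nat) (prefS : 'I_n -> nat -> nat -> bool)
  (P Q : {set {set 'I_n}}) : Prop :=
  exists (i : 'I_n) (C : {set 'I_n}),
    ((C \in P /\ C != pblock P i) \/ C = set0) /\
    Q = move P i C /\
    sprefS prefS i #|i |: C| #|pblock P i| /\
    (forall j : 'I_n, j \in C -> prefS j #|i |: C| #|C|).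

Definition singleton_partition (n : nat) : {set {set 'I_n}} :=
  [set [set i] | i : 'I_n].

Definition grand_coalition (n : nat) : {set {set 'I_n}} :=
  [set [set: 'I_n]].

Definition infinite_IS_sequence_from (n : nat) (prefS : 'I_n -> nat -> nat -> bool)
  (P0 : {set {set 'I_n}}) : Prop :=
  exists f : nat -> {set {set 'I_n}},
    f 0 = P0 /\ forall k, IS_deviation prefS (f k) (f k.+1).

(* Main.v *)
Require Import Defs.
From mathcomp Require Import all_boot.

Lemma card_lab (p : pred nat) : #|[set y : 'I_7 | p (nat_of_ord y)]| = count p (iota 0 7).
Proof. by rewrite cardsE cardE -val_enum_ord count_map /enum_mem -size_filter /enum_mem /= filter_predT. Qed.

Lemma allI7 (p : pred nat) : all p (iota 0 7) -> forall x : 'I_7, p x.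
Proof. by move=> /allP H x; apply: H; rewrite mem_iota /= ltn_ord. Qed.

Definition blk (lab : seq nat) (x : 'I_7) : {set 'I_7} :=
  [set y : 'I_7 | nth 0 lab y == nth 0 lab x].
Definition part (lab : seq nat) : {set {set 'I_7}} := [set blk lab x | x : 'I_7].

Lemma blk_in lab x : x \in blk lab x.
Proof. by rewrite inE. Qed.

Lemma blk_eq lab x y : (blk lab x == blk lab y) = (nth 0 lab x == nth 0 lab y).
Proof.
apply/eqP/eqP => [E|E].
  by have := blk_in lab x; rewrite E inE => /eqP.
by apply/setP => z; rewrite !inE E.
Qed.

Lemma blk_part lab x : blk lab x \in part lab.
Proof. exact: imset_f. Qed.

Lemma triv_part lab : trivIset (part lab).
Proof.
apply/trivIsetP => A B /imsetP [a _ ->] /imsetP [b _ ->] Hab.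
rewrite -setI_eq0; apply/eqP/setP => y; rewrite !inE.
apply/negbTE/negP => /andP [/eqP Ha /eqP Hb].
by move: Hab; rewrite blk_eq -Ha -Hb eqxx.
Qed.

Lemma pblock_part lab x : pblock (part lab) x = blk lab x.
Proof. apply: def_pblock; [exact: triv_part | exact: blk_part | exact: blk_in]. Qed.

Lemma card_blk lab x : #|blk lab x| = count (fun k => nth 0 lab k == nth 0 lab x) (iota 0 7).
Proof. by rewrite -card_lab. Qed.

Definition equivb (l1 l2 : seq nat) :=
  all (fun x => all (fun y => (nth 0 l1 x == nth 0 l1 y) == (nth 0 l2 x == nth 0 l2 y)) (iota 0 7)) (iota 0 7).

Lemma part_equiv l1 l2 : equivb l1 l2 -> part l1 = part l2.
Proof.
move=> H; apply: eq_imset => x; apply/setP => y; rewrite !inE.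
have := @allI7 (fun x => all (fun y => (nth 0 l1 x == nth 0 l1 y) == (nth 0 l2 x == nth 0 l2 y)) (iota 0 7)) H x.
move=> /(@allI7 (fun y => (nth 0 l1 x == nth 0 l1 y) == (nth 0 l2 x == nth 0 l2 y))) /(_ y) /eqP.
by rewrite ![_ == nth 0 _ x]eq_sym.
Qed.

Lemma move_part lab (i : 'I_7) (C : {set 'I_7}) (L : nat) :
  (exists2 c : 'I_7, C = blk lab c /\ L = nth 0 lab c & nth 0 lab c != nth 0 lab i) \/
  (C = set0 /\ forall k : 'I_7, nth 0 lab k != L) ->
  move (part lab) i C = part (set_nth 0 lab i L).
Proof.
set lab' := set_nth 0 lab i L.
have nE : forall k : 'I_7, nth 0 lab' k = if k == i then L else nth 0 lab k.
  by move=> k; rewrite /lab' nth_set_nth /=.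
move=> HC.
have CE : forall y : 'I_7, (y \in C) = (nth 0 lab y == L).
  move=> y; case: HC => [[c [-> ->] _]|[-> HL]]; first by rewrite inE.
  by rewrite inE; apply/esym/negbTE.
have Li : L != nth 0 lab i.
  case: HC => [[c [_ ->] //]|[_ HL]]; by rewrite eq_sym.
have bi : blk lab' i = i |: C.
  apply/setP => y; rewrite !inE !nE eqxx CE.
  by case: (y =P i) => [->|_]; rewrite ?eqxx.
have bB : forall x : 'I_7, x != i -> nth 0 lab x = nth 0 lab i -> blk lab' x = blk lab i :\ i.
  move=> x xi Hx; apply/setP => y; rewrite !inE !nE (negbTE xi) Hx.
  by case: (y =P i) => [->|_] /=; rewrite ?(negbTE Li).
have bC : forall x : 'I_7, x != i -> nth 0 lab x = L -> blk lab' x = blk lab' i.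
  by move=> x xi Hx; apply/setP => y; rewrite !inE !nE (negbTE xi) Hx eqxx.
have bO : forall x : 'I_7, nth 0 lab x != nth 0 lab i -> nth 0 lab x != L -> blk lab' x = blk lab x.
  move=> x H1 H2; have xi : x != i by apply: contraNneq H1 => ->.
  apply/setP => y; rewrite !inE !nE (negbTE xi).
  by case: (y =P i) => [->|_] //; rewrite eq_sym (negbTE H2) eq_sym (negbTE H1).
rewrite /move pblock_part.
apply/setP => X; rewrite !inE.
apply/idP/idP.
- case/andP => /orP [/andP [XC /andP [XB /imsetP [x _ EX]]]|].
    move=> _; subst X; apply/imsetP.
    have H1 : nth 0 lab x != nth 0 lab i.
      by rewrite -blk_eq.
    have H2 : nth 0 lab x != L.
      case: HC XC => [[c [-> ->] _]|[-> HL]] XC; first by rewrite -blk_eq.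
      exact: HL.
    by exists x => //; rewrite bO.
  rewrite ?inE => /orP [/eqP ->|/eqP ->] XN; apply/imsetP; last by exists i.
  case/set0Pn: XN => x; rewrite !inE => /andP [xi /eqP Hx].
  by exists x => //; rewrite bB.
- case/imsetP => x _ ->.
  case: (x =P i) => [->|/eqP xi].
    rewrite bi; apply/andP; split; last by apply/set0Pn; exists i; rewrite !inE eqxx.
    by rewrite eqxx !orbT.
  case: (nth 0 lab x =P nth 0 lab i) => [Hx|/eqP Hx].
    rewrite bB //; apply/andP; split; first by rewrite eqxx !orbT.
    by apply/set0Pn; exists x; rewrite !inE xi /= Hx.
  case: (nth 0 lab x =P L) => [HL|/eqP HL].
    rewrite bC // bi; apply/andP; split; first by rewrite eqxx !orbT.
    by apply/set0Pn; exists i; rewrite !inE eqxx.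
  rewrite bO //; apply/andP; split; last by apply/set0Pn; exists x; exact: blk_in.
  apply/orP; left; rewrite blk_eq Hx blk_part andbT.
  rewrite andbT; apply/eqP => XC; move: HL; by rewrite -CE -XC blk_in.
Qed.

Definition ranks : seq (seq nat) := [:: [:: 7; 4; 3; 2; 6; 1; 5]; [:: 4; 2; 6; 1; 7; 3; 5]; [:: 2; 4; 7; 3; 6; 1; 5]; [:: 4; 7; 2; 6; 1; 5; 3]; [:: 6; 1; 5; 2; 4; 7; 3]; [:: 2; 4; 7; 3; 6; 1; 5]; [:: 4; 7; 3; 2; 6; 1; 5]].
Definition axis : seq nat := [:: 3; 7; 4; 2; 6; 1; 5].
Definition S_L : seq (seq nat) := [:: [:: 0; 1; 2; 3; 4; 5; 6];
  [:: 0; 1; 2; 2; 3; 4; 5];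
  [:: 0; 1; 2; 2; 3; 4; 0];
  [:: 0; 1; 2; 2; 3; 0; 0];
  [:: 0; 1; 2; 0; 3; 0; 0];
  [:: 0; 1; 2; 0; 3; 1; 0];
  [:: 0; 1; 2; 3; 4; 1; 0];
  [:: 0; 1; 0; 2; 3; 1; 0];
  [:: 0; 0; 0; 1; 2; 3; 0];
  [:: 0; 0; 1; 1; 2; 3; 0]].
Definition S_W : seq (nat * option nat) := [:: (2, Some 3); (6, Some 0); (5, Some 0); (3, Some 0); (5, Some 1); (3, None); (2, Some 0); (1, Some 0); (2, Some 3); (1, None)].
Definition S_m := 2.
Definition G_L : seq (seq nat) := [:: [:: 0; 0; 0; 0; 0; 0; 0];
  [:: 0; 1; 0; 0; 0; 0; 0];
  [:: 0; 0; 1; 1; 1; 1; 1];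
  [:: 0; 0; 1; 2; 2; 2; 2];
  [:: 0; 0; 1; 2; 1; 2; 2];
  [:: 0; 1; 2; 0; 2; 0; 0];
  [:: 0; 1; 2; 0; 3; 0; 0];
  [:: 0; 1; 2; 0; 3; 1; 0];
  [:: 0; 1; 2; 3; 4; 1; 0];
  [:: 0; 1; 0; 2; 3; 1; 0];
  [:: 0; 0; 0; 1; 2; 3; 0];
  [:: 0; 0; 1; 1; 2; 3; 0];
  [:: 0; 1; 2; 2; 3; 4; 0];
  [:: 0; 1; 2; 2; 3; 0; 0]].
Definition G_W : seq (nat * option nat) := [:: (1, None); (0, Some 1); (2, None); (4, Some 2); (0, Some 3); (4, None); (5, Some 1); (3, None); (2, Some 0); (1, Some 0); (2, Some 3); (1, None); (5, Some 0); (3, Some 0)].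
Definition G_m := 6.

Definition prefN (k x y : nat) : bool :=
  index x (nth [::] ranks k) <= index y (nth [::] ranks k).
Definition prefS7 (i : 'I_7) (x y : nat) : bool := prefN i x y.
Definition sprefN k x y := prefN k x y && ~~ prefN k y x.

Definition stepb (lab lab' : seq nat) (w : nat * option nat) : bool :=
  let: (i, o) := w in
  let li := nth 0 lab i in
  let L := if o is Some c then nth 0 lab c else 100 in
  let cs := if o is Some c then count (fun k => nth 0 lab k == L) (iota 0 7) else 0 in
  let bs := count (fun k => nth 0 lab k == li) (iota 0 7) in
  [&& i < 7,
      (if o is Some c then (c < 7) && (nth 0 lab c != li)
       else all (fun k => nth 0 lab k != 100) (iota 0 7)),
      sprefN i cs.+1 bs,
      all (fun j => (nth 0 lab j == L) ==> prefN j cs.+1 cs) (iota 0 7) &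
      equivb (set_nth 0 lab i L) lab'].

Lemma step_ok lab lab' w : stepb lab lab' w -> IS_deviation prefS7 (part lab) (part lab').
Proof.
case: w => i o; case/and5P => Hi Ho Hp Hall He.
rewrite -(part_equiv _ _ He) {He}.
exists (Ordinal Hi).
case: o Ho Hp Hall => [c|].
- case/andP => Hc Hne Hp Hall; exists (blk lab (Ordinal Hc)).
  have Hni : Ordinal Hi \notin blk lab (Ordinal Hc) by rewrite inE eq_sym.
  split; first by left; split; [exact: blk_part | rewrite pblock_part blk_eq /=; exact: Hne].
  split; first by apply/esym; apply: (move_part lab (Ordinal Hi) _ (nth 0 lab c)); left; exists (Ordinal Hc).
  rewrite pblock_part cardsU1 Hni !card_blk /=.
  split; first exact: Hp.
  move=> j; rewrite inE => Hj.
  have := @allI7 (fun j => (nth 0 lab j == nth 0 lab c) ==> prefN j (count (fun k => nth 0 lab k == nth 0 lab c) (iota 0 7)).+1 (count (fun k => nth 0 lab k == nth 0 lab c) (iota 0 7))) Hall j.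
  by rewrite /= Hj.
- move=> Ho Hp _; exists set0.
  split; first by right.
  split; first by apply/esym; apply: (move_part lab (Ordinal Hi) _ 100); right; split => // k; exact: (@allI7 (fun k => nth 0 lab k != 100) Ho k).
  rewrite pblock_part setU0 cards1 card_blk.
  split; first exact: Hp.
  by move=> j; rewrite inE.
Qed.

Definition nxt (n m j : nat) := if j.+1 < n then j.+1 else m.
Definition checkall (Ls : seq (seq nat)) (W : seq (nat * option nat)) m :=
  all (fun j => stepb (nth [::] Ls j) (nth [::] Ls (nxt (size Ls) m j)) (nth (0, None) W j))
      (iota 0 (size Ls)).

Lemma inf_ok Ls W m P0 : m < size Ls -> part (nth [::] Ls 0) = P0 -> checkall Ls W m ->
  infinite_IS_sequence_from prefS7 P0.
Proof.
move=> Hm H0 Hc.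
pose g k := iter k (nxt (size Ls) m) 0.
have Hg : forall k, g k < size Ls.
  elim => [|k IH] /=; first exact: leq_ltn_trans (leq0n m) Hm.
  by rewrite /nxt; case: ifP.
exists (fun k => part (nth [::] Ls (g k))); split => // k.
apply: (@step_ok _ _ (nth (0, None) W (g k))).
by have := allP Hc (g k); rewrite mem_iota add0n Hg => /(_ isT).
Qed.

Lemma S_chk : checkall S_L S_W S_m. Proof. by vm_compute. Qed.
Lemma G_chk : checkall G_L G_W G_m. Proof. by vm_compute. Qed.

Definition gtN (x y : nat) : bool := index y axis < index x axis.
Definition S7 := iota 1 7.
Lemma sizes_in x : in_sizes 7 x -> x \in S7.
Proof. by rewrite /in_sizes /S7 mem_iota. Qed.
Definition ranks_ok := all (fun k => all (fun x => x \in nth [::] ranks k) S7) (iota 0 7).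
Definition axis_ok := all (fun x => x \in axis) S7.
Definition sp_ok := all (fun k => all (fun x => all (fun y => all (fun z =>
   ((gtN x y && gtN y z) || (gtN z y && gtN y x)) ==> sprefN k x y ==> prefN k y z) S7) S7) S7) (iota 0 7).
Lemma ranks_okT : ranks_ok. Proof. by vm_compute. Qed.
Lemma axis_okT : axis_ok. Proof. by vm_compute. Qed.
Lemma sp_okT : sp_ok. Proof. by vm_compute. Qed.

Lemma index_inj (s : seq nat) x y : x \in s -> y \in s -> index x s = index y s -> x = y.
Proof. by move=> Hx Hy E; rewrite -(nth_index 0 Hx) -(nth_index 0 Hy) E. Qed.

Lemma S0 : part (nth [::] S_L 0) = singleton_partition 7.
Proof.
have -> : nth [::] S_L 0 = iota 0 7 by [].
apply: eq_imset => x; apply/setP => y; rewrite !inE !nth_iota ?ltn_ord //.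
Qed.

Lemma G0 : part (nth [::] G_L 0) = grand_coalition 7.
Proof.
have -> : nth [::] G_L 0 = nseq 7 0 by [].
have B : forall x, blk (nseq 7 0) x = [set: 'I_7].
  by move=> x; apply/setP => y; rewrite !inE !nth_nseq !ltn_ord.
apply/setP => X; rewrite inE; apply/imsetP/eqP => [[x _ ->]|->]; first exact: B.
by exists ord0 => //; rewrite B.
Qed.

Theorem proposition3p2 :
  exists prefS : 'I_7 -> nat -> nat -> bool,
    is_AHG prefS /\ strict_prefs prefS /\ generally_single_peaked prefS /\
    infinite_IS_sequence_from prefS (singleton_partition 7) /\
    infinite_IS_sequence_from prefS (grand_coalition 7).
Proof.
exists prefS7.
split.
  move=> i; split; first by move=> x y _ _; exact: leq_total.
  by move=> x y z _ _ _; exact: leq_trans.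
split.
  move=> i x y Hx Hy H1 H2.
  have R := @allI7 (fun k => all (fun x => x \in nth [::] ranks k) S7) ranks_okT i.
  apply: (index_inj (nth [::] ranks i) x y); [exact: (allP R x (sizes_in _ Hx)) | exact: (allP R y (sizes_in _ Hy)) | ].
  by apply/anti_leq; rewrite /prefS7 /prefN in H1 H2; rewrite H1 H2.
split.
  exists gtN; split.
    split; first by move=> x _; rewrite /gtN ltnn.
    split; first by move=> x y z _ _ _ H1 H2; exact: ltn_trans H2 H1.
    move=> x y Hx Hy Hxy; rewrite /gtN.
    have Ha := allP axis_okT.
    case: (ltngtP (index y axis) (index x axis)) => H; [by left | by right |].
    by case: Hxy; apply: (index_inj axis); rewrite ?Ha ?sizes_in.
  move=> i x y z Hx Hy Hz Hg Hs.
  have := @allI7 (fun k => all (fun x => all (fun y => all (fun z =>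
   ((gtN x y && gtN y z) || (gtN z y && gtN y x)) ==> sprefN k x y ==> prefN k y z) S7) S7) S7) sp_okT i.
  move=> /allP /(_ x (sizes_in _ Hx)) /allP /(_ y (sizes_in _ Hy)) /allP /(_ z (sizes_in _ Hz)).
  by rewrite Hg /= => /implyP; apply.
split.
  exact: (inf_ok S_L S_W S_m _ (erefl true) S0 S_chk).
exact: (inf_ok G_L G_W G_m _ (erefl true) G0 G_chk).
Qed.
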